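(* Let $P=\{S_1,\ldots,S_n\}$ be a homothetic packing of $n$ squares with contact graph $G=([n],E)$. Let $\{i,j\}\in E$ and let $$p_{ij}=\left(x_i-\frac{r_i(x_i-x_j)}{r_i+r_j},\ y_i-\frac{r_i(y_i-y_j)}{r_i+r_j}\right).$$ Then: (1) the closed segment $[p_i,p_j]=\{tp_i+(1-t)p_j:t\in[0,1]\}$ is contained in $S_i\cup S_j$; (2) $[p_i,p_j]\setminus\{p_{ij}\}$ is contained in $S_i^\circ\cup S_j^\circ$; (3) $p_{ij}$ lies in the interior of $S_i\cup S_j$ if and only if $\{i,j\}\notin E_x\cap E_y$.
   Context: Let $S=\{(x,y): -1\le x,y\le 1\}$. A homothetic packing of $n$ squares is a set $P=\{S_1,\ldots,S_n\}$ with $S_i=r_iS+p_i$, $r_i>0$, $p_i=(x_i,y_i)\in\mathbb{R}^2$, such that distinct squares have disjoint interiors; $A^\circ$ denotes the interior of $A$. Its contact graph is $G=([n],E)$ where $\{i,j\}\in E$ iff $i\ne j$ and $S_i\cap S_j\ne\emptyset$. $E_x$ is the set of pairs $\{i,j\}\in E$ with $r_i+r_j=|x_i-x_j|\ge|y_i-y_j|$, and $E_y$ the set with $r_i+r_j=|y_i-y_j|\ge|x_i-x_j|$. *)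

(* Defs.v *)
From Stdlib Require Import Reals Lra.
Open Scope R_scope.

Definition pt := (R * R)%type.

Definition dist2 (p q : pt) : R :=
  sqrt ((fst p - fst q)^2 + (snd p - snd q)^2).

Definition interior2 (A : pt -> Prop) (p : pt) : Prop :=
  exists eps, 0 < eps /\ forall q, dist2 p q < eps -> A q.

Definition square (r : R) (c : pt) (q : pt) : Prop :=
  exists s : pt, -1 <= fst s <= 1 /\ -1 <= snd s <= 1 /\
    q = (r * fst s + fst c, r * snd s + snd c).

Definition homothetic_packing (n : nat) (r : nat -> R) (c : nat -> pt) : Prop :=
  (forall i, (i < n)%nat -> 0 < r i) /\
  (forall i j, (i < n)%nat -> (j < n)%nat -> i <> j ->
     forall q, ~ (interior2 (square (r i) (c i)) q /\ interior2 (square (r j) (c j)) q)).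

Definition contact_edge (n : nat) (r : nat -> R) (c : nat -> pt) (i j : nat) : Prop :=
  (i < n)%nat /\ (j < n)%nat /\ i <> j /\
  exists q, square (r i) (c i) q /\ square (r j) (c j) q.

Definition in_Ex (r : nat -> R) (c : nat -> pt) (i j : nat) : Prop :=
  r i + r j = Rabs (fst (c i) - fst (c j)) /\
  Rabs (fst (c i) - fst (c j)) >= Rabs (snd (c i) - snd (c j)).

Definition in_Ey (r : nat -> R) (c : nat -> pt) (i j : nat) : Prop :=
  r i + r j = Rabs (snd (c i) - snd (c j)) /\
  Rabs (snd (c i) - snd (c j)) >= Rabs (fst (c i) - fst (c j)).

Definition contact_point (r : nat -> R) (c : nat -> pt) (i j : nat) : pt :=
  (fst (c i) - r i * (fst (c i) - fst (c j)) / (r i + r j),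
   snd (c i) - r i * (snd (c i) - snd (c j)) / (r i + r j)).

Definition seg_pt (t : R) (p q : pt) : pt :=
  (t * fst p + (1 - t) * fst q, t * snd p + (1 - t) * snd q).

(* Main.v *)
Require Import Defs.
From Stdlib Require Import Reals Lra Psatz.
Open Scope R_scope.

Lemma Rabs_case x : (Rabs x = x /\ 0 <= x) \/ (Rabs x = - x /\ x < 0).
Proof. unfold Rabs; destruct (Rcase_abs x); [right|left]; lra. Qed.

Ltac rabs := repeat match goal with
 | H: context[Rabs ?x] |- _ => let E := fresh in
     destruct (Rabs_case x) as [[E ?]|[E ?]]; rewrite E in *; clear E
 | |- context[Rabs ?x] => let E := fresh in
     destruct (Rabs_case x) as [[E ?]|[E ?]]; rewrite E in *; clear E
 end.

Lemma sq_iff r c q : 0 < r ->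
  (square r c q <-> Rabs (fst q - fst c) <= r /\ Rabs (snd q - snd c) <= r).
Proof.
  intros Hr; destruct c as [cx cy], q as [qx qy]; unfold square; simpl; split.
  - intros [[sx sy] [Hx [Hy Heq]]]; simpl in *. injection Heq as -> ->.
    split; rabs; nra.
  - intros [Hx Hy]. exists ((qx-cx)/r, (qy-cy)/r). simpl.
    assert (Hw : r * / r = 1) by (field; lra).
    assert (Hw' : 0 < / r) by (apply Rinv_0_lt_compat; lra).
    unfold Rdiv. split; [|split]; [rabs; split; nra|rabs; split; nra|].
    f_equal; field; lra.
Qed.

Lemma abs_le_sqrt a b : Rabs a <= sqrt (a^2 + b^2).
Proof.
  rewrite <- (sqrt_pow2 (Rabs a)) by apply Rabs_pos.
  apply sqrt_le_1_alt. rewrite pow2_abs. nra.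
Qed.

Lemma dist_fst p q e : dist2 p q < e -> Rabs (fst p - fst q) < e.
Proof. unfold dist2; intros H. pose proof (abs_le_sqrt (fst p - fst q) (snd p - snd q)). lra. Qed.

Lemma dist_snd p q e : dist2 p q < e -> Rabs (snd p - snd q) < e.
Proof. unfold dist2; intros H. pose proof (abs_le_sqrt (snd p - snd q) (fst p - fst q)).
  rewrite Rplus_comm in H0. lra. Qed.

Lemma int_of r c q : 0 < r -> Rabs (fst q - fst c) < r -> Rabs (snd q - snd c) < r ->
  interior2 (square r c) q.
Proof.
  intros Hr Hx Hy. exists (Rmin (r - Rabs (fst q - fst c)) (r - Rabs (snd q - snd c))).
  split; [apply Rmin_glb_lt; lra|]. intros q' Hd. apply sq_iff; auto.
  pose proof (dist_fst _ _ _ Hd). pose proof (dist_snd _ _ _ Hd).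
  pose proof (Rmin_l (r - Rabs (fst q - fst c)) (r - Rabs (snd q - snd c))).
  pose proof (Rmin_r (r - Rabs (fst q - fst c)) (r - Rabs (snd q - snd c))).
  set (m := Rmin _ _) in *. clearbody m.
  split; rabs; lra.
Qed.

Lemma sqrt_lt_e X e : 0 <= X -> X < e^2 -> 0 < e -> sqrt X < e.
Proof. intros. rewrite <- (sqrt_pow2 e) by lra. apply sqrt_lt_1_alt. lra. Qed.

Theorem lemma11 (n : nat) (r : nat -> R) (c : nat -> pt) (i j : nat) :
  homothetic_packing n r c ->
  contact_edge n r c i j ->
  (* (1) *)
  (forall t, 0 <= t <= 1 ->
     square (r i) (c i) (seg_pt t (c i) (c j)) \/
     square (r j) (c j) (seg_pt t (c i) (c j))) /\
  (* (2) *)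
  (forall t, 0 <= t <= 1 ->
     seg_pt t (c i) (c j) <> contact_point r c i j ->
     interior2 (square (r i) (c i)) (seg_pt t (c i) (c j)) \/
     interior2 (square (r j) (c j)) (seg_pt t (c i) (c j))) /\
  (* (3) *)
  (interior2 (fun q => square (r i) (c i) q \/ square (r j) (c j) q)
             (contact_point r c i j)
   <-> ~ (in_Ex r c i j /\ in_Ey r c i j)).
Proof.
  intros [Hpos Hdisj] [Hi [Hj [Hij [q0 [Hq0i Hq0j]]]]].
  pose proof (Hpos i Hi) as Hri0. pose proof (Hpos j Hj) as Hrj0.
  specialize (Hdisj i j Hi Hj Hij).
  unfold contact_point, in_Ex, in_Ey.
  set (ri := r i) in *. set (rj := r j) in *.
  clearbody ri rj.
  destruct (c i) as [xi yi]. destruct (c j) as [xj yj].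
  simpl.
  set (D := ri + rj) in *.
  assert (HD : 0 < D) by (unfold D; lra).
  set (a := ri / D).
  assert (Ea : forall X, ri * X / D = a * X) by (intro; unfold a; field; lra).
  assert (Hri : ri = a * D) by (unfold a; field; lra).
  assert (Hrj : rj = (1 - a) * D) by (unfold a, D; field; lra).
  assert (Ha : 0 < a < 1) by (split; nra).
  clearbody a D. rewrite !Ea.
  apply sq_iff in Hq0i; auto. apply sq_iff in Hq0j; auto.
  destruct q0 as [q0x q0y]; simpl in *.
  assert (Hbx : Rabs (xi - xj) <= D) by (destruct Hq0i, Hq0j; rabs; lra).
  assert (Hby : Rabs (yi - yj) <= D) by (destruct Hq0i, Hq0j; rabs; lra).
  clear Hq0i Hq0j.
  assert (Hmax : Rabs (xi - xj) = D \/ Rabs (yi - yj) = D).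
  { destruct (Req_dec (Rabs (xi - xj)) D); auto.
    destruct (Req_dec (Rabs (yi - yj)) D); auto.
    exfalso. apply (Hdisj (xi - a * (xi - xj), yi - a * (yi - yj))).
    split; apply int_of; simpl; auto; rabs; nra. }
  split; [|split].
  - intros t Ht. rewrite !sq_iff by auto. unfold seg_pt; simpl.
    destruct (Rle_dec ((1-t)*D) ri); [left|right]; split; rabs; nra.
  - intros t Ht Hne. unfold seg_pt in *; simpl in *.
    destruct (total_order_T (1-t) a) as [[Hlt|Heq]|Hgt].
    + left. apply int_of; simpl; auto; rabs; nra.
    + exfalso; apply Hne. replace t with (1 - a) by lra. f_equal; ring.
    + right. apply int_of; simpl; auto; rabs; nra.
  - split.
    + intros [eps [Heps Hint]] [[HEx _] [HEy _]].
      assert (Hu : exists u, (u = 1 \/ u = -1) /\ xj = xi - u * D)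
        by (destruct (Rabs_case (xi - xj)) as [[E ?]|[E ?]]; rewrite E in HEx; [exists 1|exists (-1)]; split; auto; lra).
      assert (Hv : exists v, (v = 1 \/ v = -1) /\ yj = yi - v * D)
        by (destruct (Rabs_case (yi - yj)) as [[E ?]|[E ?]]; rewrite E in HEy; [exists 1|exists (-1)]; split; auto; lra).
      destruct Hu as [u [Hu Exj]]. destruct Hv as [v [Hv Eyj]]. subst xj yj.
      set (d := eps / 2).
      assert (Hd : 0 < d) by (unfold d; lra).
      specialize (Hint (xi - a * (xi - (xi - u * D)) - d * u,
                        yi - a * (yi - (yi - v * D)) + d * v)).
      destruct Hint as [Hs|Hs].
      * unfold dist2; simpl. apply sqrt_lt_e; [nra| |lra].
        unfold d; destruct Hu, Hv; subst u v; nra.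
      * apply sq_iff in Hs; auto; simpl in Hs; destruct Hs as [Hs1 Hs2].
        destruct Hu; subst u; rabs; nra.
      * apply sq_iff in Hs; auto; simpl in Hs; destruct Hs as [Hs1 Hs2].
        destruct Hv; subst v; rabs; nra.
    + intros Hnot.
      destruct (Req_dec (Rabs (xi - xj)) D) as [HX|HX];
      destruct (Req_dec (Rabs (yi - yj)) D) as [HY|HY].
      * exfalso; apply Hnot; split; split; lra.
      * assert (HY' : Rabs (yi - yj) < D) by lra.
        assert (Hu : exists u, (u = 1 \/ u = -1) /\ xj = xi - u * D)
          by (destruct (Rabs_case (xi - xj)) as [[E ?]|[E ?]]; rewrite E in *; [exists 1|exists (-1)]; split; auto; lra).
        destruct Hu as [u [Hu Exj]]. subst xj.
        assert (E1 : Rabs (yi - a * (yi - yj) - yi) = a * Rabs (yi - yj)).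
        { replace (yi - a * (yi - yj) - yi) with (- (a * (yi - yj))) by ring.
          rewrite Rabs_Ropp, Rabs_mult, (Rabs_pos_eq a) by lra. auto. }
        assert (E2 : Rabs (yi - a * (yi - yj) - yj) = (1 - a) * Rabs (yi - yj)).
        { replace (yi - a * (yi - yj) - yj) with ((1 - a) * (yi - yj)) by ring.
          rewrite Rabs_mult, (Rabs_pos_eq (1 - a)) by lra. auto. }
        assert (P1 : a * Rabs (yi - yj) < ri) by nra.
        assert (P2 : (1 - a) * Rabs (yi - yj) < rj) by nra.
        set (e := Rmin (Rmin ri rj) (Rmin (ri - a * Rabs (yi - yj)) (rj - (1 - a) * Rabs (yi - yj)))).
        assert (He1 : e <= ri - a * Rabs (yi - yj)) by
          (unfold e; eapply Rle_trans; [apply Rmin_r|apply Rmin_l]).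
        assert (He2 : e <= rj - (1 - a) * Rabs (yi - yj)) by
          (unfold e; eapply Rle_trans; [apply Rmin_r|apply Rmin_r]).
        assert (He3 : e <= ri) by
          (unfold e; eapply Rle_trans; [apply Rmin_l|apply Rmin_l]).
        assert (He4 : e <= rj) by
          (unfold e; eapply Rle_trans; [apply Rmin_l|apply Rmin_r]).
        assert (He : 0 < e) by
          (unfold e; repeat apply Rmin_glb_lt; lra).
        clearbody e.
        exists e; split; auto. intros [qx qy] Hq.
        pose proof (dist_fst _ _ _ Hq) as Hqx. pose proof (dist_snd _ _ _ Hq) as Hqy.
        simpl in Hqx, Hqy.
        rewrite !sq_iff by auto; simpl.
        assert (Hy1 : Rabs (qy - yi) <= ri) by (rewrite <- E1 in He1; rabs; lra).
        assert (Hy2 : Rabs (qy - yj) <= rj) by (rewrite <- E2 in He2; rabs; lra).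
        clear E1 E2 P1 P2 He1 He2.
        destruct Hu; subst u.
        { destruct (Rle_dec qx (xi - a * (xi - (xi - 1 * D)))) as [Hc|Hc];
          [right|left]; split; auto; clear -Hc Hqx He He3 He4 Hri Hrj Ha HD; rabs; nra. }
        { destruct (Rle_dec qx (xi - a * (xi - (xi - -1 * D)))) as [Hc|Hc];
          [left|right]; split; auto; clear -Hc Hqx He He3 He4 Hri Hrj Ha HD; rabs; nra. }
      * assert (HX' : Rabs (xi - xj) < D) by lra.
        assert (Hu : exists u, (u = 1 \/ u = -1) /\ yj = yi - u * D)
          by (destruct (Rabs_case (yi - yj)) as [[E ?]|[E ?]]; rewrite E in *; [exists 1|exists (-1)]; split; auto; lra).
        destruct Hu as [u [Hu Exj]]. subst yj.
        assert (E1 : Rabs (xi - a * (xi - xj) - xi) = a * Rabs (xi - xj)).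
        { replace (xi - a * (xi - xj) - xi) with (- (a * (xi - xj))) by ring.
          rewrite Rabs_Ropp, Rabs_mult, (Rabs_pos_eq a) by lra. auto. }
        assert (E2 : Rabs (xi - a * (xi - xj) - xj) = (1 - a) * Rabs (xi - xj)).
        { replace (xi - a * (xi - xj) - xj) with ((1 - a) * (xi - xj)) by ring.
          rewrite Rabs_mult, (Rabs_pos_eq (1 - a)) by lra. auto. }
        assert (P1 : a * Rabs (xi - xj) < ri) by nra.
        assert (P2 : (1 - a) * Rabs (xi - xj) < rj) by nra.
        set (e := Rmin (Rmin ri rj) (Rmin (ri - a * Rabs (xi - xj)) (rj - (1 - a) * Rabs (xi - xj)))).
        assert (He1 : e <= ri - a * Rabs (xi - xj)) by
          (unfold e; eapply Rle_trans; [apply Rmin_r|apply Rmin_l]).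
        assert (He2 : e <= rj - (1 - a) * Rabs (xi - xj)) by
          (unfold e; eapply Rle_trans; [apply Rmin_r|apply Rmin_r]).
        assert (He3 : e <= ri) by
          (unfold e; eapply Rle_trans; [apply Rmin_l|apply Rmin_l]).
        assert (He4 : e <= rj) by
          (unfold e; eapply Rle_trans; [apply Rmin_l|apply Rmin_r]).
        assert (He : 0 < e) by
          (unfold e; repeat apply Rmin_glb_lt; lra).
        clearbody e.
        exists e; split; auto. intros [qx qy] Hq.
        pose proof (dist_fst _ _ _ Hq) as Hqx. pose proof (dist_snd _ _ _ Hq) as Hqy.
        simpl in Hqx, Hqy.
        rewrite !sq_iff by auto; simpl.
        assert (Hy1 : Rabs (qx - xi) <= ri) by (rewrite <- E1 in He1; rabs; lra).
        assert (Hy2 : Rabs (qx - xj) <= rj) by (rewrite <- E2 in He2; rabs; lra).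
        clear E1 E2 P1 P2 He1 He2.
        destruct Hu; subst u.
        { destruct (Rle_dec qy (yi - a * (yi - (yi - 1 * D)))) as [Hc|Hc];
          [right|left]; split; auto; clear -Hc Hqy He He3 He4 Hri Hrj Ha HD; rabs; nra. }
        { destruct (Rle_dec qy (yi - a * (yi - (yi - -1 * D)))) as [Hc|Hc];
          [left|right]; split; auto; clear -Hc Hqy He He3 He4 Hri Hrj Ha HD; rabs; nra. }
      * exfalso; destruct Hmax; auto.
Qed.
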